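(* Let $\Psi^P\subset\mathbb C\times\mathbb C\times\mathbb C^2\times\mathbb C^3$ be the set of solutions $(d,r,\bar t,\bar x)$ of the system $$\sum_{i=1}^3(P_0x_i-P_i)^2-d^2P_0^2=0,\quad n_i(P_0x_j-P_j)-n_j(P_0x_i-P_i)=0\ (1\le i<j\le3),\quad r\,P_0\,h\,\beta-1=0,$$ (where $P_i,n_i,h,\beta$ are evaluated at $\bar t$), and let $\pi_1^P(d,r,\bar t,\bar x)=(d,\bar x)$. Then $\mathcal O_d(\Sigma)$ equals the Zariski closure of $\pi_1^P(\Psi^P)$.
   Context: $f\in\mathbb C[y_1,y_2,y_3]$ irreducible defines the surface $\Sigma$; $f_i=\partial f/\partial y_i$, $h_{\rm imp}=\sum f_i^2$, not identically zero on $\Sigma$. The generic offset $\mathcal O_d(\Sigma)\subset\mathbb C^4$ is the Zariski closure of the projection to $(d,\bar x)$ of the solutions $(d,\bar x,\bar y,u)$ of: $f(\bar y)=0$; $f_i(\bar y)(x_j-y_j)-f_j(\bar y)(x_i-y_i)=0$ ($i<j$); $\sum(x_i-y_i)^2-d^2=0$; $u\,h_{\rm imp}(\bar y)-1=0$. $P(\bar t)=(P_1/P_0,P_2/P_0,P_3/P_0)$, $\bar t=(t_1,t_2)$, $P_i\in\mathbb C[\bar t]$, $\gcd(P_0,\dots,P_3)=1$, is a (not necessarily proper) rational parametrization of $\Sigma$ (image Zariski dense). Write $\frac{\partial P}{\partial t_1}\wedge\frac{\partial P}{\partial t_2}=(A_1/A_0,A_2/A_0,A_3/A_0)$ ($\wedge$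 the cross product, $A_i\in\mathbb C[\bar t]$), $n_i=A_i/\gcd(A_1,A_2,A_3)$, $h=n_1^2+n_2^2+n_3^2$, and fix $\mu\in\mathbb N$ and a nonzero $\beta\in\mathbb C[\bar t]$ with $\gcd(\beta,P_0)=1$ such that $f_i(P(\bar t))=\beta(\bar t)P_0(\bar t)^{-\mu}n_i(\bar t)$ for $i=1,2,3$. *)

(* Defs.v *)
(* Polynomials in several variables are represented by
   syntactic polynomial expressions (terms) over a field R, evaluated as
   polynomial functions R^n -> R.  Over an infinite field the map from the
   polynomial ring R[X_0..X_{n-1}] to polynomial functions is an injective
   ring morphism, so equality / divisibility / irreducibility of polynomials
   may be tested on the associated functions. *)
From HB Require Import structures.
From mathcomp Require Import all_boot all_order all_algebra.
Set Implicit Arguments. Unset Strict Implicit. Unset Printing Implicit Defensive.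
Import Order.TTheory GRing.Theory Num.Theory.
Local Open Scope ring_scope.

Inductive mpoly (R : Type) (n : nat) : Type :=
| MC of R
| MX of 'I_n
| MAdd of mpoly R n & mpoly R n
| MMul of mpoly R n & mpoly R n.
Arguments MC {R n}. Arguments MX {R n}.

Section MPoly.
Variables (R : numClosedFieldType) (n : nat).

Fixpoint meval (p : mpoly R n) (x : 'I_n -> R) : R :=
  match p with
  | MC c => c
  | MX i => x i
  | MAdd p q => meval p x + meval q x
  | MMul p q => meval p x * meval q x
  end.

Fixpoint mderiv (i : 'I_n) (p : mpoly R n) : mpoly R n :=
  match p with
  | MC _ => MC 0
  | MX j => MC (if j == i then 1 else 0)
  | MAdd p q => MAdd (mderiv i p) (mderiv i q)
  | MMul p q => MAdd (MMul (mderiv i p) q) (MMul p (mderiv i q))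
  end.

Definition msub (p q : mpoly R n) : mpoly R n := MAdd p (MMul (MC (-1)) q).

Definition mconst (p : mpoly R n) : Prop := exists c : R, forall x, meval p x = c.
Definition mzero (p : mpoly R n) : Prop := forall x, meval p x = 0.
Definition mdvd (a b : mpoly R n) : Prop :=
  exists q : mpoly R n, forall x, meval b x = meval a x * meval q x.
(* irreducible: nonzero nonunit (= nonconstant) with only trivial factorizations *)
Definition mirreducible (f : mpoly R n) : Prop :=
  ~ mconst f /\
  forall g h : mpoly R n, (forall x, meval f x = meval g x * meval h x) ->
    mconst g \/ mconst h.

Definition zclosure (S : ('I_n -> R) -> Prop) (x : 'I_n -> R) : Prop :=
  forall p : mpoly R n, (forall y, S y -> meval p y = 0) -> meval p x = 0.
End MPoly.

Section Offset.
Variable R : numClosedFieldType.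

Definition dcoord (z : 'I_4 -> R) : R := z ord0.
Definition xcoord (z : 'I_4 -> R) (i : 'I_3) : R := z (lift ord0 i).

Definition himp (f : mpoly R 3) (y : 'I_3 -> R) : R :=
  \sum_(i < 3) (meval (mderiv i f) y) ^+ 2.

Definition offset_proj (f : mpoly R 3) (z : 'I_4 -> R) : Prop :=
  exists (y : 'I_3 -> R) (u : R),
    [/\ meval f y = 0,
        forall i j : 'I_3, (i < j)%N ->
          meval (mderiv i f) y * (xcoord z j - y j)
          - meval (mderiv j f) y * (xcoord z i - y i) = 0,
        \sum_(i < 3) (xcoord z i - y i) ^+ 2 - dcoord z ^+ 2 = 0
      & u * himp f y - 1 = 0].

Definition generic_offset (f : mpoly R 3) : ('I_4 -> R) -> Prop :=
  zclosure (offset_proj f).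

(* numerator of d/dt_k (P_i / P_0):  dP_i/dt_k * P_0 - P_i * dP_0/dt_k *)
Definition Dnum (P0 : mpoly R 2) (Pv : 'I_3 -> mpoly R 2) (i : 'I_3) (k : 'I_2)
  : mpoly R 2 :=
  msub (MMul (mderiv k (Pv i)) P0) (MMul (Pv i) (mderiv k P0)).

(* dP/dt_1 /\ dP/dt_2 = (A_1/A_0, A_2/A_0, A_3/A_0) with A_0 = P_0^4 and
   A_i the following polynomials (cross product of the numerators) *)
Definition Acomp (P0 : mpoly R 2) (Pv : 'I_3 -> mpoly R 2) (i : 'I_3)
  : mpoly R 2 :=
  let u j := Dnum P0 Pv j ord0 in
  let v j := Dnum P0 Pv j (lift ord0 ord0) in
  let j1 : 'I_3 := inord ((i + 1) %% 3) in
  let j2 : 'I_3 := inord ((i + 2) %% 3) in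
  msub (MMul (u j1) (v j2)) (MMul (u j2) (v j1)).

Definition Ppt (P0 : mpoly R 2) (Pv : 'I_3 -> mpoly R 2) (t : 'I_2 -> R)
  : 'I_3 -> R := fun i => meval (Pv i) t / meval P0 t.

Definition psi_proj (P0 : mpoly R 2) (Pv n : 'I_3 -> mpoly R 2)
  (beta : mpoly R 2) (z : 'I_4 -> R) : Prop :=
  exists (r : R) (t : 'I_2 -> R),
    let p0 := meval P0 t in
    let w i := p0 * xcoord z i - meval (Pv i) t in
    let h := \sum_(i < 3) (meval (n i) t) ^+ 2 in
    [/\ \sum_(i < 3) (w i) ^+ 2 - dcoord z ^+ 2 * p0 ^+ 2 = 0,
        forall i j : 'I_3, (i < j)%N ->
          meval (n i) t * w j - meval (n j) t * w i = 0
      & r * p0 * h * meval beta t - 1 = 0].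
End Offset.

(* Main.v *)
Require Import Defs.
From HB Require Import structures.
From mathcomp Require Import all_boot all_order all_algebra.
Import Order.TTheory GRing.Theory Num.Theory.
Local Open Scope ring_scope.
Set Implicit Arguments. Unset Strict Implicit.
From Stdlib Require Import Classical FunctionalExtensionality.

Section Aux.
Variable R : numClosedFieldType.

Lemma poly_fun0 (p : {poly R}) : (forall s, p.[s] = 0) -> p = 0.
Proof.
move=> H; apply/eqP; apply/negPn/negP => pn0.
have A : all (root p) [seq i%:R | i <- iota 0 (size p)].
  by apply/allP => x /mapP [i _ ->]; rewrite /root H.
have U : uniq [seq i%:R : R | i <- iota 0 (size p)].
  by rewrite map_inj_uniq ?iota_uniq // => i j /eqP; rewrite eqr_nat => /eqP.
have := max_poly_roots pn0 A U.
by rewrite size_map size_iota ltnn.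
Qed.

Variable n : nat.

Fixpoint mline (a b : 'I_n -> R) (p : mpoly R n) : {poly R} :=
  match p with
  | MC c => c%:P
  | MX i => (a i)%:P + (b i)%:P * 'X
  | MAdd p q => mline a b p + mline a b q
  | MMul p q => mline a b p * mline a b q
  end.

Lemma mlineE a b p s : (mline a b p).[s] = meval p (fun i => a i + b i * s).
Proof.
elim: p => [c|i|p IHp q IHq|p IHp q IHq] /=.
- by rewrite hornerC.
- by rewrite hornerD hornerC hornerCM hornerX.
- by rewrite hornerD IHp IHq.
- by rewrite hornerM IHp IHq.
Qed.

Lemma mfun_dom (p q : mpoly R n) :
  (forall x, meval p x * meval q x = 0) -> ~ mzero q -> mzero p.
Proof.
move=> H nq x.
have [y qy] : exists y, meval q y != 0.
  apply: NNPP => /= hn; apply: nq => y; apply/eqP; apply: negbNE; apply/negP => ny.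
  by apply: hn; exists y.
pose b := fun i => y i - x i.
have E : forall (r : mpoly R n) s, meval r (fun i => x i + b i * s) = (mline x b r).[s].
  by move=> r s; rewrite mlineE.
have : mline x b p * mline x b q = 0.
  by apply: poly_fun0 => s; rewrite hornerM -!E H.
move/eqP; rewrite mulf_eq0 => /orP [/eqP Hp|/eqP Hq].
- have := E p 0; rewrite Hp horner0.
  have -> : (fun i => x i + b i * 0) = x by apply: functional_extensionality => i; rewrite mulr0 addr0.
  done.
- have := E q 1; rewrite Hq horner0.
  have -> : (fun i => x i + b i * 1) = y by apply: functional_extensionality => i; rewrite mulr1 /b addrC subrK.
  by move=> e; rewrite e eqxx in qy.
Qed.
End Aux.
Section Aux2.
Variable R : numClosedFieldType.
Variables (D2 : mpoly R 3) (S : 'I_3 -> mpoly R 3).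

Lemma mulE (a1 b1 a2 b2 d : R) :
  (a1 + d * b1) * (a2 + d * b2) = (a1 * a2 + d ^+ 2 * (b1 * b2)) + d * (a1 * b2 + b1 * a2).
Proof.
rewrite mulrDl !mulrDr -!addrA; congr (_ + _).
rewrite [RHS]addrC -addrA; congr (_ + _); first by rewrite mulrCA.
congr (_ + _); first by rewrite -mulrA.
by rewrite expr2 mulrACA.
Qed.

Fixpoint msplit (p : mpoly R 4) : mpoly R 3 * mpoly R 3 :=
  match p with
  | MC c => (MC c, MC 0)
  | MX j => match unlift ord0 j with None => (MC 0, MC 1) | Some i => (S i, MC 0) end
  | MAdd p q => let (a1, b1) := msplit p in let (a2, b2) := msplit q in
                (MAdd a1 a2, MAdd b1 b2)
  | MMul p q => let (a1, b1) := msplit p in let (a2, b2) := msplit q in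
                (MAdd (MMul a1 a2) (MMul D2 (MMul b1 b2)), MAdd (MMul a1 b2) (MMul b1 a2))
  end.

Lemma msplitE (p : mpoly R 4) (z : 'I_4 -> R) (y : 'I_3 -> R) :
  z ord0 ^+ 2 = meval D2 y -> (forall i, z (lift ord0 i) = meval (S i) y) ->
  meval p z = meval (msplit p).1 y + z ord0 * meval (msplit p).2 y.
Proof.
move=> Hd Hs.
elim: p => [c|j|p IHp q IHq|p IHp q IHq] /=.
- by rewrite mulr0 addr0.
- case: unliftP => [i ->|->] /=; first by rewrite Hs mulr0 addr0.
  by rewrite mulr1 add0r.
- case: (msplit p) IHp => a1 b1 /= ->; case: (msplit q) IHq => a2 b2 /= ->.
  by rewrite mulrDr addrACA.
- case: (msplit p) IHp => a1 b1 /= ->; case: (msplit q) IHq => a2 b2 /= ->.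
  rewrite -Hd; exact: mulE.
Qed.
End Aux2.

Section Aux3.
Variable R : numClosedFieldType.
Variables (P0 : mpoly R 2) (Pv : 'I_3 -> mpoly R 2).

Fixpoint mpow (p : mpoly R 2) (k : nat) : mpoly R 2 :=
  match k with 0 => MC 1 | k.+1 => MMul p (mpow p k) end.

Lemma mpowE p k t : meval (mpow p k) t = meval p t ^+ k.
Proof. by elim: k => [|k IH] /=; rewrite ?expr0 // exprS IH. Qed.

Fixpoint mhom (q : mpoly R 3) : mpoly R 2 * nat :=
  match q with
  | MC c => (MC c, 0%N)
  | MX i => (Pv i, 1%N)
  | MAdd a b => let (ha, ka) := mhom a in let (hb, kb) := mhom b in
       (MAdd (MMul ha (mpow P0 kb)) (MMul hb (mpow P0 ka)), (ka + kb)%N)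
  | MMul a b => let (ha, ka) := mhom a in let (hb, kb) := mhom b in
       (MMul ha hb, (ka + kb)%N)
  end.

Lemma mhomE q t : meval P0 t != 0 ->
  meval (mhom q).1 t = meval q (Ppt P0 Pv t) * meval P0 t ^+ (mhom q).2.
Proof.
move=> nz; elim: q => [c|i|a IHa b IHb|a IHa b IHb] /=.
- by rewrite expr0 mulr1.
- by rewrite /Ppt expr1 divfK.
- case: (mhom a) IHa => ha ka /=; case: (mhom b) IHb => hb kb /= -> ->.
  rewrite !mpowE mulrDl exprD -!mulrA [_ ^+ kb * _]mulrC.
  done.
- case: (mhom a) IHa => ha ka /=; case: (mhom b) IHb => hb kb /= -> ->.
  by rewrite exprD mulrACA.
Qed.
End Aux3.
Lemma swap5 (R : comRingType) (a b c d e : R) : a * b * c * d * e = a * e * c * d * b.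
Proof. rewrite -!mulrA; congr (_ * _).
by rewrite [b * _]mulrCA [b * _]mulrCA [e * _]mulrCA [e * _]mulrCA [b * e]mulrC. Qed.

Section Main.
Variable R : numClosedFieldType.

Definition msum (F : 'I_3 -> mpoly R 3) : mpoly R 3 := \big[@MAdd _ _/MC 0]_(i < 3) F i.
Definition msum2 (F : 'I_3 -> mpoly R 2) : mpoly R 2 := \big[@MAdd _ _/MC 0]_(i < 3) F i.

Lemma msumE F y : meval (msum F) y = \sum_(i < 3) meval (F i) y.
Proof. by rewrite /msum (big_morph (fun p => meval p y) (id1 := 0) (op1 := +%R)). Qed.
Lemma msum2E F y : meval (msum2 F) y = \sum_(i < 3) meval (F i) y.
Proof. by rewrite /msum2 (big_morph (fun p => meval p y) (id1 := 0) (op1 := +%R)). Qed.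

Lemma cancel0 (a c : R) : c != 0 -> a * c = 0 -> a = 0.
Proof. by move=> nc /eqP; rewrite mulf_eq0 (negbTE nc) orbF => /eqP. Qed.

Variables (f : mpoly R 3) (P0 : mpoly R 2) (Pv : 'I_3 -> mpoly R 2)
  (n : 'I_3 -> mpoly R 2) (mu : nat) (beta : mpoly R 2).
Hypothesis hy0 : exists y, meval f y = 0 /\ himp f y != 0.
Hypothesis nP0 : ~ mzero P0.
Hypothesis Hdens : forall y, zclosure (fun y' => exists t, meval P0 t != 0 /\ (forall i, y' i = Ppt P0 Pv t i)) y
             <-> meval f y = 0.
Hypothesis nbeta : ~ mzero beta.
Hypothesis Hfi : forall i t, meval P0 t != 0 ->
     meval (mderiv i f) (Ppt P0 Pv t) * meval P0 t ^+ mu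
     = meval beta t * meval (n i) t.

Definition Hm := msum (fun i => MMul (mderiv i f) (mderiv i f)).
Definition hn := msum2 (fun i => MMul (n i) (n i)).

Lemma HmE y : meval Hm y = himp f y.
Proof. by rewrite msumE /himp; apply: eq_bigr => i _; rewrite /= expr2. Qed.
Lemma hnE t : meval hn t = \sum_(i < 3) meval (n i) t ^+ 2.
Proof. by rewrite msum2E; apply: eq_bigr => i _; rewrite /= expr2. Qed.

Lemma LH t : meval P0 t != 0 ->
  himp f (Ppt P0 Pv t) * (meval P0 t ^+ mu) ^+ 2 = meval beta t ^+ 2 * meval hn t.
Proof.
move=> nz; rewrite /himp hnE mulr_suml mulr_sumr; apply: eq_bigr => i _.
by rewrite -exprMn Hfi // exprMn.
Qed.

Lemma on_img t : meval P0 t != 0 -> meval f (Ppt P0 Pv t) = 0.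
Proof. by move=> nz; apply/Hdens => p Hp; apply: Hp; exists t. Qed.

Lemma img_eq y' : (exists t, meval P0 t != 0 /\ (forall i, y' i = Ppt P0 Pv t i)) ->
  exists t, meval P0 t != 0 /\ y' = Ppt P0 Pv t.
Proof.
by case=> t [nz e]; exists t; split => //; apply: functional_extensionality.
Qed.

Lemma hn_nz : ~ mzero hn.
Proof.
move=> h0; case: hy0 => y [fy hy]; move/Hdens: fy => /(_ Hm) Hc.
move/negP: hy; apply; apply/eqP; rewrite -HmE; apply: Hc => y' /img_eq [t [nz ->]].
rewrite HmE; apply: (cancel0 (c := (meval P0 t ^+ mu) ^+ 2)).
  by rewrite !expf_neq0.
by rewrite LH // h0 mulr0.
Qed.

Lemma dens3 (q : mpoly R 3) :
  (forall t, meval P0 t * meval beta t * meval hn t != 0 -> meval q (Ppt P0 Pv t) = 0) ->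
  forall y, meval f y = 0 -> meval q y = 0.
Proof.
move=> Hq y /Hdens Hy; apply: Hy => y' /img_eq [t [nz ->]].
pose G := MMul (MMul P0 beta) hn.
have nG : ~ mzero G.
  move=> g0; apply: nP0; apply: (@mfun_dom _ _ P0 beta) => // x.
  apply: (@mfun_dom _ _ (MMul P0 beta) hn) => //; exact: hn_nz.
have K0 : mzero (mhom P0 Pv q).1.
  apply: (mfun_dom (q := G)) => // x.
  have [/eqP G0|G0] := boolP (meval G x == 0); first by rewrite G0 mulr0.
  have nzx : meval P0 x != 0.
    by apply: contra G0 => /eqP /= ->; rewrite !mul0r.
  by rewrite mhomE // Hq ?mul0r.
apply: (cancel0 (c := meval P0 t ^+ (mhom P0 Pv q).2)); first by rewrite expf_neq0.
by rewrite -mhomE.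
Qed.

Lemma psi_sub z' : psi_proj P0 Pv n beta z' -> offset_proj f z'.
Proof.
case=> r [t] /= [e1 e2 e3].
have nz3 : meval P0 t * meval hn t * meval beta t != 0.
  have e3' : r * (meval P0 t * meval hn t * meval beta t) = 1.
    by move/eqP: e3; rewrite subr_eq0 hnE !mulrA => /eqP.
  by apply/negP => /eqP e; move: e3'; rewrite e mulr0 => /eqP; rewrite eq_sym oner_eq0.
have nzP : meval P0 t != 0 by move: nz3; rewrite !mulf_eq0 => /norP [/norP []].
have nzb : meval beta t != 0 by move: nz3; rewrite !mulf_eq0 => /norP [].
have nzh : meval hn t != 0 by move: nz3; rewrite !mulf_eq0 => /norP [/norP []].
set y := Ppt P0 Pv t.
have nzH : himp f y != 0.
  apply/negP => /eqP H0; have := LH nzP; rewrite -/y H0 mul0r => /esym /eqP.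
  by rewrite mulf_eq0 expf_eq0 (negbTE nzb) (negbTE nzh) andbF.
have Ew : forall i, meval P0 t * (xcoord z' i - y i) = meval P0 t * xcoord z' i - meval (Pv i) t.
  by move=> i; rewrite mulrBr /y /Ppt [X in _ - X]mulrCA mulfV // mulr1.
exists y, (himp f y)^-1; split.
- exact: on_img.
- move=> i j ij; apply: (cancel0 (c := meval P0 t ^+ mu * meval P0 t)).
    by rewrite mulf_neq0 ?expf_neq0.
  rewrite mulrBl !mulrA -![_ * _ * meval P0 t ^+ mu]mulrAC !Hfi //.
  rewrite -!mulrA ![_ * meval P0 t]mulrC !Ew !mulrA -mulrA -[meval beta t * _ * _]mulrA -mulrBr.
  by rewrite e2 // mulr0.
- apply: (cancel0 (c := meval P0 t ^+ 2)); first by rewrite expf_neq0.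
  rewrite mulrBl mulr_suml -[X in _ - X = 0]exprMn.
  have -> : \sum_(i < 3) (xcoord z' i - y i) ^+ 2 * meval P0 t ^+ 2
          = \sum_(i < 3) (meval P0 t * xcoord z' i - meval (Pv i) t) ^+ 2.
    by apply: eq_bigr => i _; rewrite -exprMn mulrC Ew.
  by rewrite exprMn.
- by rewrite mulVf // subrr.
Qed.
Definition mkz (d : R) (X : 'I_3 -> R) : 'I_4 -> R :=
  fun j => if unlift ord0 j is Some i then X i else d.

Lemma mkz0 d X : mkz d X ord0 = d.
Proof. by rewrite /mkz unlift_none. Qed.
Lemma mkzl d X i : mkz d X (lift ord0 i) = X i.
Proof. by rewrite /mkz liftK. Qed.

Lemma psi_pt (lam s : R) t :
  meval P0 t * meval beta t * meval hn t != 0 ->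
  s ^+ 2 = lam ^+ 2 * himp f (Ppt P0 Pv t) ->
  psi_proj P0 Pv n beta
    (mkz s (fun i => Ppt P0 Pv t i + lam * meval (mderiv i f) (Ppt P0 Pv t))).
Proof.
move=> nz3 hs.
have nzP : meval P0 t != 0 by move: nz3; rewrite !mulf_eq0 => /norP [/norP []].
set y := Ppt P0 Pv t in hs *.
exists (meval P0 t * meval hn t * meval beta t)^-1, t => /=.
have Ew : forall i, meval P0 t * xcoord (mkz s (fun i => y i + lam * meval (mderiv i f) y)) i
     - meval (Pv i) t = meval P0 t * lam * meval (mderiv i f) y.
  move=> i; rewrite /xcoord mkzl mulrDr /y /Ppt [X in X + _ - _]mulrCA mulfV // mulr1.
  by rewrite addrAC subrr add0r mulrA.
split.
- rewrite /dcoord mkz0.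
  have -> : \sum_(i < 3) (meval P0 t * xcoord (mkz s (fun i => y i + lam * meval (mderiv i f) y)) i
     - meval (Pv i) t) ^+ 2 = (meval P0 t * lam) ^+ 2 * himp f y.
    rewrite /himp mulr_sumr; apply: eq_bigr => i _; by rewrite Ew exprMn.
  rewrite hs !exprMn; apply/eqP; rewrite subr_eq0; apply/eqP.
  by rewrite [RHS]mulrC -mulrA.
- move=> i j ij; rewrite !Ew.
  apply: (cancel0 (c := meval P0 t ^+ mu)); first by rewrite expf_neq0.
  rewrite mulrBl -!mulrA !Hfi // !mulrA [meval (n i) t * _]mulrC.
  by rewrite [meval (n j) t * meval P0 t]mulrC swap5 subrr.
- rewrite -hnE -!mulrA mulVf ?subrr //.
  by rewrite [meval hn t * _]mulrC mulrA.
Qed.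
Lemma off_sub (p : mpoly R 4) :
  (forall z', psi_proj P0 Pv n beta z' -> meval p z' = 0) ->
  forall z', offset_proj f z' -> meval p z' = 0.
Proof.
move=> Hp z' [y [u [fy Hn Hd Hu]]].
have nzH : himp f y != 0.
  apply/negP => /eqP H0; move: Hu; rewrite H0 mulr0 sub0r => /eqP.
  by rewrite oppr_eq0 oner_eq0.
have [k Hk] : exists k, meval (mderiv k f) y != 0.
  apply: NNPP => hn0; move/negP: nzH; apply; apply/eqP; rewrite /himp big1 // => i _.
  have : ~ (meval (mderiv i f) y != 0) by move=> h; apply: hn0; exists i.
  by move/negP/negPn/eqP => ->; rewrite expr2 mulr0.
pose lam := (xcoord z' k - y k) / meval (mderiv k f) y.
have Hx : forall j, xcoord z' j = y j + lam * meval (mderiv j f) y.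
  move=> j; rewrite addrC; apply/eqP; rewrite -subr_eq; apply/eqP.
  apply: (mulIf Hk); rewrite /lam mulrAC divfK //.
  case: (ltngtP j k) => [jk|kj|/val_inj ->] //.
  - move/eqP: (Hn j k jk); rewrite subr_eq0 => /eqP e.
    by rewrite mulrC -e mulrC.
  - move/eqP: (Hn k j kj); rewrite subr_eq0 => /eqP e.
    by rewrite mulrC e mulrC.
have Hd2 : dcoord z' ^+ 2 = lam ^+ 2 * himp f y.
  move/eqP: Hd; rewrite subr_eq0 => /eqP <-.
  rewrite /himp mulr_sumr; apply: eq_bigr => i _.
  by rewrite Hx addrC addKr exprMn.
pose D2 := MMul (MC (lam ^+ 2)) Hm.
pose S := fun i => MAdd (MX i) (MMul (MC lam) (mderiv i f)).
have Hsplit : forall t, meval P0 t * meval beta t * meval hn t != 0 ->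
   forall s, s ^+ 2 = lam ^+ 2 * himp f (Ppt P0 Pv t) ->
   meval (msplit D2 S p).1 (Ppt P0 Pv t) + s * meval (msplit D2 S p).2 (Ppt P0 Pv t) = 0.
  move=> t nz3 s hs.
  have E := @msplitE _ D2 S p (mkz s (fun i => Ppt P0 Pv t i + lam * meval (mderiv i f) (Ppt P0 Pv t))) (Ppt P0 Pv t).
  rewrite mkz0 in E; rewrite -E.
  - by apply: Hp; apply: psi_pt.
  - by rewrite hs /= HmE.
  - by move=> i; rewrite mkzl.
have HH : forall t, meval P0 t * meval beta t * meval hn t != 0 ->
   himp f (Ppt P0 Pv t) != 0.
  move=> t nz3.
  have nzP : meval P0 t != 0 by move: nz3; rewrite !mulf_eq0 => /norP [/norP []].
  have nzb : meval beta t != 0 by move: nz3; rewrite !mulf_eq0 => /norP [/norP []].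
  have nzh : meval hn t != 0 by move: nz3; rewrite !mulf_eq0 => /norP [].
  apply/negP => /eqP H0; have := LH nzP; rewrite H0 mul0r => /esym /eqP.
  by rewrite mulf_eq0 expf_eq0 (negbTE nzb) (negbTE nzh) andbF.
have HA0 : forall t, meval P0 t * meval beta t * meval hn t != 0 ->
    meval (msplit D2 S p).1 (Ppt P0 Pv t) = 0.
  move=> t nz3.
  set d := lam * sqrtC (himp f (Ppt P0 Pv t)).
  have hd : d ^+ 2 = lam ^+ 2 * himp f (Ppt P0 Pv t) by rewrite exprMn sqrtCK.
  have e1 := Hsplit t nz3 d hd.
  have e2 := Hsplit t nz3 (- d) (etrans (sqrrN d) hd).
  set a := meval (msplit D2 S p).1 _ in e1 e2 *.
  set b := meval (msplit D2 S p).2 _ in e1 e2.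
  have : a *+ 2 = 0.
    by rewrite mulr2n -[a + a]addr0 -{1}(subrr (d * b)) addrACA e1 -mulNr e2 addr0.
  by move/eqP; rewrite mulrn_eq0 /= => /eqP.
have HA : meval (msplit D2 S p).1 y = 0 by apply: (dens3 _ fy).
have HB : lam != 0 -> meval (msplit D2 S p).2 y = 0.
  move=> nl; apply: (dens3 _ fy) => t nz3.
  set d := lam * sqrtC (himp f (Ppt P0 Pv t)).
  have hd : d ^+ 2 = lam ^+ 2 * himp f (Ppt P0 Pv t) by rewrite exprMn sqrtCK.
  have e1 := Hsplit t nz3 d hd.
  have nd : d != 0 by rewrite mulf_neq0 // sqrtC_eq0 HH.
  have a0 := HA0 t nz3.
  by move: e1; rewrite a0 add0r => /eqP; rewrite mulf_eq0 (negbTE nd) => /eqP.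
rewrite (@msplitE _ D2 S p z' y).
- rewrite HA add0r; have [/eqP l0|nl] := boolP (lam == 0).
    have : z' ord0 ^+ 2 = 0 by rewrite [LHS]Hd2 l0 expr0n mul0r.
    by move/eqP; rewrite expf_eq0 /= => /eqP ->; rewrite mul0r.
  by rewrite HB // mulr0.
- by rewrite [LHS]Hd2 /= HmE.
- by move=> i; rewrite /= -Hx.
Qed.

End Main.
Theorem mainTheorem13 (R : numClosedFieldType)
  (f : mpoly R 3) (P0 : mpoly R 2) (Pv : 'I_3 -> mpoly R 2)
  (g : mpoly R 2) (n : 'I_3 -> mpoly R 2) (mu : nat) (beta : mpoly R 2) :
  (* f irreducible, h_imp not identically zero on Sigma *)
  mirreducible f ->
  (exists y, meval f y = 0 /\ himp f y != 0) ->
  (* P = (P1/P0, P2/P0, P3/P0) with gcd(P0,...,P3) = 1 *)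
  ~ mzero P0 ->
  (forall d, mdvd d P0 -> (forall i, mdvd d (Pv i)) -> mconst d) ->
  (* the image of P is Zariski dense in Sigma = V(f) *)
  (forall y, zclosure (fun y' => exists t, meval P0 t != 0 /\ (forall i, y' i = Ppt P0 Pv t i)) y
             <-> meval f y = 0) ->
  (* n_i = A_i / gcd(A_1, A_2, A_3) *)
  (forall i t, meval (Acomp P0 Pv i) t = meval g t * meval (n i) t) ->
  (forall d, (forall i, mdvd d (n i)) -> mconst d) ->
  (* beta nonzero, gcd(beta, P0) = 1, f_i(P(t)) = beta P0^{-mu} n_i *)
  ~ mzero beta ->
  (forall d, mdvd d beta -> mdvd d P0 -> mconst d) ->
  (forall i t, meval P0 t != 0 ->
     meval (mderiv i f) (Ppt P0 Pv t) * meval P0 t ^+ mu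
     = meval beta t * meval (n i) t) ->
  forall z : 'I_4 -> R,
    generic_offset f z <-> zclosure (psi_proj P0 Pv n beta) z.
Proof.
move=> _ hy0 nP0 _ Hdens _ _ nbeta _ Hfi z; split.
- move=> Hg p Hp; apply: Hg; exact: (off_sub hy0 nP0 Hdens nbeta Hfi Hp).
- move=> Hz p Hp; apply: Hz => z' Hz'; apply: Hp; exact: (psi_sub Hdens Hfi Hz').
Qed.
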